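(* Let $k\ge 1$ be an integer and $p\in[0,1]$. Let $I_1,\dots,I_k$ be independent random variables with $P(I_j=1)=p$, $P(I_j=0)=1-p$. Let $P@i=\frac1i\sum_{j=1}^i I_j$ and $$AP@k=\frac1k\sum_{i=1}^k P@i\cdot I_i.$$ Then $$\operatorname{E}(AP@k)=p\left(p+(1-p)\frac1k H_k\right),$$ where $H_k=\sum_{i=1}^k\frac1i$.
   Context: This is the online evaluation model: each of the top-$k$ recommended items is relevant independently with probability $p$ ($I_j=1$ iff the item at position $j$ is relevant). The expectation is called $MAP_{WR}@k$ in the paper. *)

(* Defs.v *)
From mathcomp Require Import all_boot all_order all_algebra.
Set Implicit Arguments. Unset Strict Implicit. Unset Printing Implicit Defensive.
Import Order.TTheory GRing.Theory Num.Theory.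
Local Open Scope ring_scope.

(* An outcome: w j = true iff the item at position j+1 is relevant (I_{j+1}=1). *)
Definition outcome (k : nat) := {ffun 'I_k -> bool}.

Definition ind (R : pzRingType) (k : nat) (w : outcome k) (j : 'I_k) : R :=
  (w j)%:R.

Definition bern_prob (R : pzRingType) (k : nat) (p : R) (w : outcome k) : R :=
  \prod_(j < k) (if w j then p else 1 - p).

(* P@i = (1/i) * sum_{j=1}^i I_j  (positions are 1-based; j : 'I_k is position j+1). *)
Definition Pat (R : fieldType) (k : nat) (w : outcome k) (i : nat) : R :=
  (i%:R)^-1 * \sum_(j < k | (j < i)%N) ind R w j.

Definition APk (R : fieldType) (k : nat) (w : outcome k) : R :=
  (k%:R)^-1 * \sum_(i < k) Pat R w i.+1 * ind R w i.

Definition Ebern (R : fieldType) (k : nat) (p : R) (X : outcome k -> R) : R :=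
  \sum_(w : outcome k) bern_prob p w * X w.

Definition harmonic (R : fieldType) (k : nat) : R :=
  \sum_(i < k) (i.+1%:R)^-1.

(* Main.v *)
Require Import Defs.
From mathcomp Require Import all_boot all_order all_algebra.
From mathcomp Require Import ring lra.
Import Order.TTheory GRing.Theory Num.Theory.
Local Open Scope ring_scope.

Section S.
Variables (R : realFieldType) (k : nat) (p : R).

Lemma E_prod (S : {set 'I_k}) :
  Ebern p (fun w : outcome k => \prod_(j in S) ind R w j) = p ^+ #|S|.
Proof.
rewrite /Ebern.
transitivity (\sum_(w : {ffun 'I_k -> bool}) \prod_(j < k)
   ((if w j then p else 1 - p) * (if j \in S then (w j)%:R else 1))).
  apply: eq_bigr => w _; rewrite /bern_prob (big_mkcond (fun j => j \in S)).
  by rewrite -big_split.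
rewrite -(bigA_distr_bigA (fun (j : 'I_k) (b : bool) =>
   (if b then p else 1 - p) * (if j \in S then b%:R else 1))).
transitivity (\prod_(j < k) (if j \in S then p else 1)).
  apply: eq_bigr => j _; rewrite big_bool /=.
  by case: (j \in S) => /=; rewrite ?mulr1 ?mulr0 ?addr0 // addrC subrK.
by rewrite -big_mkcond prodr_const.
Qed.

Lemma E_ext (X Y : outcome k -> R) : (forall w, X w = Y w) -> Ebern p X = Ebern p Y.
Proof. by move=> h; apply: eq_bigr => w _; rewrite h. Qed.

Lemma E_sum (I : Type) (r : seq I) (P : pred I) (F : I -> outcome k -> R) :
  Ebern p (fun w => \sum_(i <- r | P i) F i w) = \sum_(i <- r | P i) Ebern p (F i).
Proof.
rewrite /Ebern; under eq_bigr do rewrite mulr_sumr; exact: exchange_big.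
Qed.

Lemma E_scale c (X : outcome k -> R) : Ebern p (fun w => c * X w) = c * Ebern p X.
Proof.
rewrite /Ebern mulr_sumr; apply: eq_bigr => w _; ring.
Qed.

Lemma E_pair (i j : 'I_k) :
  Ebern p (fun w => ind R w j * ind R w i) = if j == i then p else p ^+ 2.
Proof.
case: eqP => [->|/eqP ne].
  transitivity (p ^+ #|[set i]|); last by rewrite cards1 expr1.
  rewrite -E_prod; apply: E_ext => w.
  by rewrite big_set1 /ind; case: (w i); rewrite ?mulr1 ?mulr0.
transitivity (p ^+ #|[set j; i]|); last by rewrite cards2 ne.
rewrite -E_prod; apply: E_ext => w.
rewrite big_setU1 ?inE // big_set1 //.
Qed.

End S.

Theorem theorem3 (R : realFieldType) (k : nat) (p : R) :
  (1 <= k)%N -> 0 <= p -> p <= 1 ->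
  Ebern p (@APk R k) = p * (p + (1 - p) * ((k%:R)^-1 * harmonic R k)).
Proof.
move=> hk _ _.
have -> : Ebern p (@APk R k) = Ebern p (fun w => (k%:R)^-1 *
   \sum_(i < k) \sum_(j < k | (j < i.+1)%N) (i.+1%:R)^-1 * (ind R w j * ind R w i)).
  apply: E_ext => w; rewrite /APk /Pat; congr (_ * _); apply: eq_bigr => i _.
  by rewrite -mulrA mulr_suml mulr_sumr.
rewrite E_scale E_sum.
have inner : forall i : 'I_k, Ebern p (fun w =>
    \sum_(j < k | (j < i.+1)%N) (i.+1%:R)^-1 * (ind R w j * ind R w i))
    = p ^+ 2 + (p - p ^+ 2) * (i.+1%:R)^-1.
  move=> i; rewrite E_sum.
  under eq_bigr do rewrite E_scale E_pair.
  rewrite -(big_ord_widen _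
     (fun j : nat => (i.+1%:R)^-1 * (if j == i :> nat then p else p ^+ 2)) (ltn_ord i)).
  rewrite big_ord_recr /= eqxx.
  rewrite (eq_bigr (fun _ => (i.+1%:R)^-1 * p ^+ 2)); last first.
    by move=> j _; rewrite ifF // ltn_eqF.
  rewrite sumr_const card_ord.
  have hn : (i.+1%:R : R) != 0 by rewrite pnatr_eq0.
  rewrite -mulr_natr; move: hn; rewrite -addn1 natrD => hn; by field.
rewrite (eq_bigr _ (fun i _ => inner i)).
rewrite big_split /= -mulr_sumr sumr_const card_ord /harmonic.
have hn : (k%:R : R) != 0 by rewrite pnatr_eq0 -lt0n.
rewrite -mulr_sumr -mulr_natr.
field; done.
Qed.
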